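(* Let $a\ge7$ be an odd integer and $M_a=(4,6,a,a+2)$. Then $$I_{M_a}=\mathrm{rad}\big(x_2^{a-2}-x_1^{a-4}x_4^2,\;x_3^{a-2}-x_1^2x_4^{a-4},\;x_1x_4-x_2x_3,\;x_1^{a+2}-x_4^4,\;x_4^2-x_1x_3^2\big)$$ in $K[x_1,x_2,x_3,x_4]$, for any field $K$.
   Context: For a $1\times n$ integer row matrix $M=(a_1,\dots,a_n)$ (positive entries), the toric ideal $I_M\subseteq K[x_1,\dots,x_n]$ is the kernel of $K[x_1,\dots,x_n]\to K[t]$, $x_i\mapsto t^{a_i}$ (the ideal of the monomial curve $(t^{a_1},\dots,t^{a_n})$). *)

(* Defs.v *)
From HB Require Import structures.
From mathcomp Require Import all_boot all_order all_algebra.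
From mathcomp Require Import multinomials.mpoly.
Set Implicit Arguments. Unset Strict Implicit. Unset Printing Implicit Defensive.
Import GRing.Theory.
Local Open Scope ring_scope.

Definition toric_ideal (K : fieldType) (n : nat) (w : 'I_n -> nat)
  (p : {mpoly K[n]}) : Prop :=
  mmap (@polyC K) (fun i => 'X^(w i)) p = 0.

Definition ideal_gen (R : comRingType) (gs : seq R) (f : R) : Prop :=
  exists cs : seq R, f = \sum_(i < size gs) cs`_i * gs`_i.

Definition rad_gen (R : comRingType) (gs : seq R) (f : R) : Prop :=
  exists k : nat, ideal_gen gs (f ^+ k).

Definition Ma (a : nat) : 'I_4 -> nat :=
  fun i => nth 0%N [:: 4; 6; a; a.+2]%N i.

(* Main.v *)
Require Import Defs.
From HB Require Import structures.
From mathcomp Require Import all_boot all_order all_algebra.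
From mathcomp Require Import multinomials.mpoly.
From mathcomp Require Import zify ring lra.
Import GRing.Theory.
Local Open Scope ring_scope.

Lemma idealP (R : comRingType) (gs : seq R) f :
  ideal_gen gs f <-> exists c : 'I_(size gs) -> R, f = \sum_i c i * gs`_i.
Proof.
split=> [[cs ->]|[c ->]]; first by exists (fun i => cs`_i).
exists (mkseq (fun i => if insub i is Some j then c j else 0) (size gs)).
by apply: eq_bigr => i _; rewrite nth_mkseq // valK.
Qed.

Lemma ideal0 (R : comRingType) (gs : seq R) : ideal_gen gs 0.
Proof. apply/idealP; exists (fun _ => 0); by rewrite big1 // => i _; rewrite mul0r. Qed.

Lemma idealD (R : comRingType) (gs : seq R) f g :
  ideal_gen gs f -> ideal_gen gs g -> ideal_gen gs (f + g).
Proof.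
move=> /idealP[c1 ->] /idealP[c2 ->]; apply/idealP; exists (fun i => c1 i + c2 i).
by rewrite -big_split; apply: eq_bigr => i _; rewrite mulrDl.
Qed.

Lemma idealMl (R : comRingType) (gs : seq R) h f :
  ideal_gen gs f -> ideal_gen gs (h * f).
Proof.
move=> /idealP[c ->]; apply/idealP; exists (fun i => h * c i).
by rewrite mulr_sumr; apply: eq_bigr => i _; rewrite mulrA.
Qed.

Lemma idealMr (R : comRingType) (gs : seq R) h f :
  ideal_gen gs f -> ideal_gen gs (f * h).
Proof. by rewrite mulrC; apply: idealMl. Qed.

Lemma idealN (R : comRingType) (gs : seq R) f :
  ideal_gen gs f -> ideal_gen gs (- f).
Proof. by move=> H; rewrite -mulN1r; apply: idealMl. Qed.

Lemma idealB (R : comRingType) (gs : seq R) f g :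
  ideal_gen gs f -> ideal_gen gs g -> ideal_gen gs (f - g).
Proof. by move=> Hf Hg; apply: idealD => //; apply: idealN. Qed.

Lemma ideal_mem (R : comRingType) (gs : seq R) i :
  (i < size gs)%N -> ideal_gen gs gs`_i.
Proof.
move=> Hi; apply/idealP; exists (fun j => (nat_of_ord j == i)%:R).
rewrite (bigD1 (Ordinal Hi)) //= eqxx mul1r big1 ?addr0 // => j /negPf Hj.
by rewrite -val_eqE /= in Hj; rewrite Hj mul0r.
Qed.

Lemma ideal_sum (R : comRingType) (gs : seq R) (I : Type) (r : seq I) (P : pred I) F :
  (forall i, P i -> ideal_gen gs (F i)) -> ideal_gen gs (\sum_(i <- r | P i) F i).
Proof. move=> H; apply: big_ind => //; [exact: ideal0 | exact: idealD]. Qed.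

Lemma radI (R : comRingType) (gs : seq R) f : ideal_gen gs f -> rad_gen gs f.
Proof. by move=> H; exists 1%N; rewrite expr1. Qed.

Lemma radMl (R : comRingType) (gs : seq R) h f : rad_gen gs f -> rad_gen gs (h * f).
Proof. by move=> [k Hk]; exists k; rewrite exprMn; apply: idealMl. Qed.

Lemma radX (R : comRingType) (gs : seq R) f k : rad_gen gs (f ^+ k) -> rad_gen gs f.
Proof. by move=> [m Hm]; exists (k * m)%N; rewrite exprM. Qed.

Lemma radD (R : comRingType) (gs : seq R) f g :
  rad_gen gs f -> rad_gen gs g -> rad_gen gs (f + g).
Proof.
move=> [m Hm] [n Hn]; exists (m + n)%N; rewrite exprDn.
apply: ideal_sum => i _; rewrite -mulr_natl; apply: idealMl.
case: (leqP n i) => hi.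
  have ->: g ^+ i = g ^+ (i - n) * g ^+ n by rewrite -exprD subnK.
  by rewrite mulrA; apply: idealMl.
have ->: (m + n - i = (m + n - i - m) + m)%N by rewrite subnK //; lia.
rewrite exprD mulrAC mulrC.
exact: idealMr.
Qed.
Definition sat (R : comRingType) (gs : seq R) (x f : R) : Prop :=
  exists N, ideal_gen gs (x ^+ N * f).
Arguments sat {R}.

Lemma satI (R : comRingType) (gs : seq R) x f : ideal_gen gs f -> sat gs x f.
Proof. by move=> H; exists 0%N; rewrite expr0 mul1r. Qed.

Lemma sat0 (R : comRingType) (gs : seq R) x : sat gs x 0.
Proof. by apply: satI; apply: ideal0. Qed.

Lemma satD (R : comRingType) (gs : seq R) x f g :
  sat gs x f -> sat gs x g -> sat gs x (f + g).
Proof.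
move=> [m Hm] [n Hn]; exists (m + n)%N; rewrite mulrDr; apply: idealD.
  by rewrite exprD mulrAC mulrC; apply: idealMl.
by rewrite exprD -mulrA; apply: idealMl.
Qed.

Lemma satMl (R : comRingType) (gs : seq R) x h f : sat gs x f -> sat gs x (h * f).
Proof. by move=> [m Hm]; exists m; rewrite mulrCA; apply: idealMl. Qed.

Lemma satN (R : comRingType) (gs : seq R) x f : sat gs x f -> sat gs x (- f).
Proof. by move=> H; rewrite -mulN1r; apply: satMl. Qed.

Lemma satB (R : comRingType) (gs : seq R) x f g :
  sat gs x f -> sat gs x g -> sat gs x (f - g).
Proof. by move=> Hf Hg; apply: satD => //; apply: satN. Qed.

Lemma sat_cancel (R : comRingType) (gs : seq R) x k f : sat gs x (x ^+ k * f) -> sat gs x f.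
Proof. by move=> [m Hm]; exists (m + k)%N; rewrite exprD -mulrA. Qed.

Definition eqS (R : comRingType) (gs : seq R) x f g := sat gs x (f - g).
Arguments eqS {R}.

Lemma eqS_refl (R : comRingType) (gs : seq R) x f : eqS gs x f f.
Proof. by rewrite /eqS subrr; apply: sat0. Qed.

Lemma eqS_trans (R : comRingType) (gs : seq R) x f g h :
  eqS gs x f g -> eqS gs x g h -> eqS gs x f h.
Proof.
rewrite /eqS => H1 H2; have ->: f - h = (f - g) + (g - h) by rewrite addrA subrK.
exact: satD.
Qed.

Lemma eqS_mul (R : comRingType) (gs : seq R) x f g h k :
  eqS gs x f g -> eqS gs x h k -> eqS gs x (f * h) (g * k).
Proof.
rewrite /eqS => H1 H2; have ->: f * h - g * k = h * (f - g) + g * (h - k) by ring.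
by apply: satD; apply: satMl.
Qed.

Lemma eqS_X (R : comRingType) (gs : seq R) x f g k :
  eqS gs x f g -> eqS gs x (f ^+ k) (g ^+ k).
Proof.
move=> H; elim: k => [|k IH]; first by rewrite !expr0; apply: eqS_refl.
by rewrite !exprS; apply: eqS_mul.
Qed.

Lemma ideal_cons (R : comRingType) (gs : seq R) h f :
  ideal_gen (h :: gs) f -> exists j c, ideal_gen gs j /\ f = j + c * h.
Proof.
move=> /idealP[c ->]; rewrite big_ord_recl /=.
exists (\sum_(i < size gs) c (lift ord0 i) * gs`_i), (c ord0); split; last by rewrite addrC.
by apply/idealP; exists (fun i => c (lift ord0 i)).
Qed.

Lemma ideal_cons_head (R : comRingType) (gs : seq R) h : ideal_gen (h :: gs) h.
Proof. exact: (@ideal_mem _ (h :: gs) 0%N). Qed.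

Lemma ideal_cons_tail (R : comRingType) (gs : seq R) h f :
  ideal_gen gs f -> ideal_gen (h :: gs) f.
Proof.
move=> /idealP[c ->]; apply/idealP.
exists (fun i : 'I_(size gs).+1 => if unlift ord0 i is Some j then c j else 0).
rewrite big_ord_recl unlift_none mul0r add0r; apply: eq_bigr => i _.
by rewrite liftK.
Qed.

Lemma rad_ideal (R : comRingType) (gs hs : seq R) f :
  ideal_gen gs f -> (forall i, (i < size gs)%N -> rad_gen hs gs`_i) -> rad_gen hs f.
Proof.
move=> /idealP[c ->] H; apply: big_ind => //.
- by exists 1%N; rewrite expr1; apply: ideal0.
- exact: radD.
by move=> i _; apply: radMl; apply: H.
Qed.

Definition X1 (K : fieldType) : {mpoly K[4]} := 'X_(inord 0).
Definition X2 (K : fieldType) : {mpoly K[4]} := 'X_(inord 1).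
Definition X3 (K : fieldType) : {mpoly K[4]} := 'X_(inord 2).
Definition X4 (K : fieldType) : {mpoly K[4]} := 'X_(inord 3).

Definition Jl (K : fieldType) (a : nat) : seq {mpoly K[4]} :=
  [:: X2 K ^+ (a - 2) - X1 K ^+ (a - 4) * X4 K ^+ 2;
      X3 K ^+ (a - 2) - X1 K ^+ 2 * X4 K ^+ (a - 4);
      X1 K * X4 K - X2 K * X3 K;
      X1 K ^+ (a + 2) - X4 K ^+ 4;
      X4 K ^+ 2 - X1 K * X3 K ^+ 2].

Definition phi (K : fieldType) (a : nat) : {rmorphism {mpoly K[4]} -> {poly K}} :=
  mmap (@polyC K) (fun i : 'I_4 => 'X^(Ma a i)).

Lemma pw (R : ringType) (x : R) m n : m = n -> x ^+ m = x ^+ n.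
Proof. by move->. Qed.

Lemma phiX1 (K : fieldType) a : phi K a (X1 K) = 'X^4.
Proof. by rewrite /phi /X1 /= mmapX mmap1U /Ma inordK. Qed.
Lemma phiX2 (K : fieldType) a : phi K a (X2 K) = 'X^6.
Proof. by rewrite /phi /X2 /= mmapX mmap1U /Ma inordK. Qed.
Lemma phiX3 (K : fieldType) a : phi K a (X3 K) = 'X^a.
Proof. by rewrite /phi /X3 /= mmapX mmap1U /Ma inordK. Qed.
Lemma phiX4 (K : fieldType) a : phi K a (X4 K) = 'X^(a.+2).
Proof. by rewrite /phi /X4 /= mmapX mmap1U /Ma inordK. Qed.

Lemma phi_gen (K : fieldType) a (m1 m2 m3 m4 n1 n2 n3 n4 : nat) :
  (4 * m1 + 6 * m2 + a * m3 + a.+2 * m4 = 4 * n1 + 6 * n2 + a * n3 + a.+2 * n4)%N ->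
  phi K a (X1 K ^+ m1 * X2 K ^+ m2 * X3 K ^+ m3 * X4 K ^+ m4
           - X1 K ^+ n1 * X2 K ^+ n2 * X3 K ^+ n3 * X4 K ^+ n4) = 0.
Proof.
move=> H; rewrite rmorphB !rmorphM !rmorphXn phiX1 phiX2 phiX3 phiX4 -!exprM -!exprD.
by apply/eqP; rewrite subr_eq0; apply/eqP; apply: pw; lia.
Qed.

Lemma phi_Jl (K : fieldType) a i : (4 <= a)%N -> (i < 5)%N -> phi K a (Jl K a)`_i = 0.
Proof.
move=> ha; case: i => [|[|[|[|[|i]]]]] // _.
- have := @phi_gen K a 0 (a - 2) 0 0 (a - 4) 0 0 2; rewrite !expr0 !mulr1 !mul1r => /(_ ltac:(lia)) H; exact: H.
- have := @phi_gen K a 0 0 (a - 2) 0 2 0 0 (a - 4); rewrite !expr0 !mulr1 !mul1r => /(_ ltac:(nia)) H; exact: H.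
- have := @phi_gen K a 1 0 0 1 0 1 1 0; rewrite !expr0 !expr1 !mulr1 !mul1r => /(_ ltac:(lia)) H; exact: H.
- have := @phi_gen K a (a + 2) 0 0 0 0 0 0 4; rewrite !expr0 !mulr1 !mul1r => /(_ ltac:(lia)) H; exact: H.
- have := @phi_gen K a 0 0 0 2 1 0 2 0; rewrite !expr0 !expr1 !mulr1 !mul1r => /(_ ltac:(lia)) H; exact: H.
Qed.

Lemma ideal_phi (K : fieldType) a f : (4 <= a)%N -> ideal_gen (Jl K a) f -> phi K a f = 0.
Proof.
move=> ha /idealP[c ->]; rewrite rmorph_sum big1 // => i _.
by rewrite rmorphM phi_Jl ?mulr0.
Qed.

Lemma sat_phi (K : fieldType) a f : (4 <= a)%N -> sat (Jl K a) (X1 K) f -> phi K a f = 0.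
Proof.
move=> ha [N /(@ideal_phi K a _ ha)]; rewrite rmorphM rmorphXn phiX1 => /eqP.
by rewrite mulf_eq0 !expf_eq0 polyX_eq0 !andbF /= => /eqP.
Qed.


Lemma F2 (K : fieldType) a : sat (Jl K a) (X1 K) (X3 K ^+ 2 * (X2 K ^+ 2 - X1 K ^+ 3)).
Proof.
apply: satI.
have ->: X3 K ^+ 2 * (X2 K ^+ 2 - X1 K ^+ 3) = X1 K ^+ 2 * (X4 K ^+ 2 - X1 K * X3 K ^+ 2)
   - (X1 K * X4 K + X2 K * X3 K) * (X1 K * X4 K - X2 K * X3 K) by ring.
apply: idealB; apply: idealMl.
  exact: (@ideal_mem _ (Jl K a) 4).
exact: (@ideal_mem _ (Jl K a) 2).
Qed.

Lemma F3 (K : fieldType) a : sat (Jl K a) (X1 K) (X1 K ^+ a - X3 K ^+ 4).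
Proof.
apply: (@sat_cancel _ _ _ 2); apply: satI.
have ->: X1 K ^+ 2 * (X1 K ^+ a - X3 K ^+ 4) = (X1 K ^+ (a + 2) - X4 K ^+ 4)
   + (X4 K ^+ 2 + X1 K * X3 K ^+ 2) * (X4 K ^+ 2 - X1 K * X3 K ^+ 2) by rewrite exprD; ring.
apply: idealD; last apply: idealMl.
  exact: (@ideal_mem _ (Jl K a) 3).
exact: (@ideal_mem _ (Jl K a) 4).
Qed.

Lemma F4 (K : fieldType) a : sat (Jl K a) (X1 K) (X2 K ^+ 2 - X1 K ^+ 3).
Proof.
apply: (@sat_cancel _ _ _ a).
have ->: X1 K ^+ a * (X2 K ^+ 2 - X1 K ^+ 3) = (X2 K ^+ 2 - X1 K ^+ 3) * (X1 K ^+ a - X3 K ^+ 4)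
   + X3 K ^+ 2 * (X3 K ^+ 2 * (X2 K ^+ 2 - X1 K ^+ 3)) by ring.
apply: satD; apply: satMl; [exact: F3 | exact: F2].
Qed.

Lemma F5 (K : fieldType) d : sat (Jl K (d.*2 + 7)) (X1 K) (X3 K ^+ 2 - X1 K ^+ (d + 2) * X2 K).
Proof.
apply: (@sat_cancel _ _ _ (d.*2 + 4)).
set a := (d.*2 + 7)%N.
have g1 := @ideal_mem _ (Jl K a) 0 erefl.
have g5 := @ideal_mem _ (Jl K a) 4 erefl.
have H := @eqS_X _ (Jl K a) (X1 K) _ _ (d + 2) (F4 K a).
move: g1 g5 H; rewrite /eqS /=.
set x1 := X1 K; set x2 := X2 K; set x3 := X3 K; set x4 := X4 K.
set y1 := x1 ^+ d; set y2 := x2 ^+ d.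
have e1 : x1 ^+ (d.*2 + 4) = y1 ^+ 2 * x1 ^+ 4 by rewrite -exprM -exprD; apply: pw; lia.
have e2 : x1 ^+ (d + 2) = y1 * x1 ^+ 2 by rewrite -exprD.
have e3 : (x2 ^+ 2) ^+ (d + 2) = y2 ^+ 2 * x2 ^+ 4 by rewrite -!exprM -exprD; apply: pw; lia.
have e4 : (x1 ^+ 3) ^+ (d + 2) = y1 ^+ 3 * x1 ^+ 6 by rewrite -!exprM -exprD; apply: pw; lia.
have e5 : x2 ^+ (a - 2) = y2 ^+ 2 * x2 ^+ 5 by rewrite -exprM -exprD; apply: pw; rewrite /a; lia.
have e6 : x1 ^+ (a - 4) = y1 ^+ 2 * x1 ^+ 3 by rewrite -exprM -exprD; apply: pw; rewrite /a; lia.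
rewrite e1 e2 e3 e4 e5 e6 => g1 g5 H.
have ->: y1 ^+ 2 * x1 ^+ 4 * (x3 ^+ 2 - y1 * x1 ^+ 2 * x2) =
  x2 * (y2 ^+ 2 * x2 ^+ 4 - y1 ^+ 3 * x1 ^+ 6)
  - ((y2 ^+ 2 * x2 ^+ 5 - y1 ^+ 2 * x1 ^+ 3 * x4 ^+ 2) + y1 ^+ 2 * x1 ^+ 3 * (x4 ^+ 2 - x1 * x3 ^+ 2)) by ring.
apply: satB; first by apply: satMl.
by apply: satI; apply: idealD => //; apply: idealMl.
Qed.

Definition E (K : fieldType) (q : {poly K}) : {mpoly K[4]} :=
  (map_poly (@mpolyC 4 K) q).[X1 K].
Arguments E {K}.

Lemma E_add (K : fieldType) (p q : {poly K}) : E (p + q) = E p + E q.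
Proof. by rewrite /E rmorphD hornerD. Qed.
Lemma E_mul (K : fieldType) (p q : {poly K}) : E (p * q) = E p * E q.
Proof. by rewrite /E rmorphM hornerM. Qed.
Lemma E_X (K : fieldType) : E ('X : {poly K}) = X1 K.
Proof. by rewrite /E map_polyX hornerX. Qed.
Lemma E_C (K : fieldType) (c : K) : E c%:P = c%:MP.
Proof. by rewrite /E map_polyC hornerC. Qed.
Lemma E_Xn (K : fieldType) k (q : {poly K}) : E ('X^k * q) = X1 K ^+ k * E q.
Proof. by rewrite E_mul /E rmorphXn /= map_polyX hornerXn. Qed.
Lemma E_0 (K : fieldType) : E (0 : {poly K}) = 0.
Proof. by rewrite /E rmorph0 horner0. Qed.
Lemma E_1 (K : fieldType) : E (1 : {poly K}) = 1.
Proof. by rewrite /E rmorph1 hornerC. Qed.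

Definition NF (K : fieldType) (q0 q1 q2 q3 : {poly K}) : {mpoly K[4]} :=
  E q0 + E q1 * X2 K + E q2 * X3 K + E q3 * (X2 K * X3 K).
Arguments NF {K}.

Definition red (K : fieldType) a (p : {mpoly K[4]}) : Prop :=
  exists N q0 q1 q2 q3, eqS (Jl K a) (X1 K) (X1 K ^+ N * p) (NF q0 q1 q2 q3).

Lemma eqS_eq (R : comRingType) (gs : seq R) x f g : f = g -> eqS gs x f g.
Proof. by move->; apply: eqS_refl. Qed.

Lemma eqS_add (R : comRingType) (gs : seq R) x f g h k :
  eqS gs x f g -> eqS gs x h k -> eqS gs x (f + h) (g + k).
Proof.
rewrite /eqS => H1 H2; have ->: f + h - (g + k) = (f - g) + (h - k) by ring.
exact: satD.
Qed.

Lemma eqS_mull (R : comRingType) (gs : seq R) x f g h :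
  eqS gs x f g -> eqS gs x (h * f) (h * g).
Proof. by move=> H; apply: eqS_mul => //; apply: eqS_refl. Qed.

Lemma red0 (K : fieldType) a : red K a 0.
Proof.
exists 0%N, 0, 0, 0, 0; apply: eqS_eq; rewrite /NF E_0; ring.
Qed.

Lemma red1 (K : fieldType) a : red K a 1.
Proof.
exists 0%N, 1, 0, 0, 0; apply: eqS_eq; rewrite /NF E_0 E_1; ring.
Qed.

Lemma red_add (K : fieldType) a p q : red K a p -> red K a q -> red K a (p + q).
Proof.
move=> [N [q0 [q1 [q2 [q3 H1]]]]] [M [r0 [r1 [r2 [r3 H2]]]]].
exists (N + M)%N, ('X^M * q0 + 'X^N * r0), ('X^M * q1 + 'X^N * r1),
  ('X^M * q2 + 'X^N * r2), ('X^M * q3 + 'X^N * r3).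
have ->: X1 K ^+ (N + M) * (p + q) = X1 K ^+ M * (X1 K ^+ N * p) + X1 K ^+ N * (X1 K ^+ M * q)
  by rewrite exprD; ring.
have ->: NF ('X^M * q0 + 'X^N * r0) ('X^M * q1 + 'X^N * r1)
  ('X^M * q2 + 'X^N * r2) ('X^M * q3 + 'X^N * r3) =
  X1 K ^+ M * NF q0 q1 q2 q3 + X1 K ^+ N * NF r0 r1 r2 r3 by rewrite /NF !E_add !E_Xn; ring.
by apply: eqS_add; apply: eqS_mull.
Qed.

Lemma red_scale (K : fieldType) a (c : K) p : red K a p -> red K a (c%:MP * p).
Proof.
move=> [N [q0 [q1 [q2 [q3 H1]]]]].
exists N, (c%:P * q0), (c%:P * q1), (c%:P * q2), (c%:P * q3).
have ->: X1 K ^+ N * (c%:MP * p) = c%:MP * (X1 K ^+ N * p) by ring.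
have ->: NF (c%:P * q0) (c%:P * q1) (c%:P * q2) (c%:P * q3) = c%:MP * NF q0 q1 q2 q3
  by rewrite /NF !E_mul !E_C; ring.
by apply: eqS_mull.
Qed.

Lemma red_x1 (K : fieldType) a p : red K a p -> red K a (X1 K * p).
Proof.
move=> [N [q0 [q1 [q2 [q3 H1]]]]].
exists N, ('X^1 * q0), ('X^1 * q1), ('X^1 * q2), ('X^1 * q3).
have ->: X1 K ^+ N * (X1 K * p) = X1 K * (X1 K ^+ N * p) by ring.
have ->: NF ('X^1 * q0) ('X^1 * q1) ('X^1 * q2) ('X^1 * q3) = X1 K * NF q0 q1 q2 q3
  by rewrite /NF !E_Xn expr1; ring.
by apply: eqS_mull.
Qed.

Lemma red_x2 (K : fieldType) a p : red K a p -> red K a (X2 K * p).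
Proof.
move=> [N [q0 [q1 [q2 [q3 H1]]]]].
exists N, ('X^3 * q1), q0, ('X^3 * q3), q2.
have ->: X1 K ^+ N * (X2 K * p) = X2 K * (X1 K ^+ N * p) by ring.
apply: (@eqS_trans _ _ _ _ (X2 K * NF q0 q1 q2 q3)); first exact: eqS_mull.
rewrite /eqS.
have ->: X2 K * NF q0 q1 q2 q3 - NF ('X^3 * q1) q0 ('X^3 * q3) q2 =
  (E q1 + E q3 * X3 K) * (X2 K ^+ 2 - X1 K ^+ 3) by rewrite /NF !E_Xn; ring.
by apply: satMl; apply: F4.
Qed.

Lemma red_x3 (K : fieldType) d p : red K (d.*2 + 7) p -> red K (d.*2 + 7) (X3 K * p).
Proof.
move=> [N [q0 [q1 [q2 [q3 H1]]]]].
exists N, ('X^(d + 2) * ('X^3 * q3)), ('X^(d + 2) * q2), q0, q1.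
have ->: X1 K ^+ N * (X3 K * p) = X3 K * (X1 K ^+ N * p) by ring.
apply: (@eqS_trans _ _ _ _ (X3 K * NF q0 q1 q2 q3)); first exact: eqS_mull.
rewrite /eqS.
have ->: X3 K * NF q0 q1 q2 q3 - NF ('X^(d + 2) * ('X^3 * q3)) ('X^(d + 2) * q2) q0 q1 =
  (E q2 + E q3 * X2 K) * (X3 K ^+ 2 - X1 K ^+ (d + 2) * X2 K)
  + (E q3 * X1 K ^+ (d + 2)) * (X2 K ^+ 2 - X1 K ^+ 3) by rewrite /NF !E_Xn; ring.
by apply: satD; apply: satMl; [apply: F5 | apply: F4].
Qed.

Lemma red_x4 (K : fieldType) d p : red K (d.*2 + 7) p -> red K (d.*2 + 7) (X4 K * p).
Proof.
move=> /red_x3 /red_x2 [N [q0 [q1 [q2 [q3 H1]]]]].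
exists N.+1, q0, q1, q2, q3.
apply: (@eqS_trans _ _ _ _ _ _ _ H1).
rewrite /eqS.
have ->: X1 K ^+ N.+1 * (X4 K * p) - X1 K ^+ N * (X2 K * (X3 K * p)) =
  (X1 K ^+ N * p) * (X1 K * X4 K - X2 K * X3 K) by rewrite exprS; ring.
by apply: satMl; apply: satI; exact: (@ideal_mem _ (Jl K _) 2).
Qed.

Lemma red_Xi (K : fieldType) d (i : 'I_4) p :
  red K (d.*2 + 7) p -> red K (d.*2 + 7) ('X_i * p).
Proof.
case: i => [[|[|[|[|k]]]] Hi] //.
- have ->: Ordinal Hi = inord 0 by apply/val_inj; rewrite /= inordK.
  exact: red_x1.
- have ->: Ordinal Hi = inord 1 by apply/val_inj; rewrite /= inordK.
  exact: red_x2.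
- have ->: Ordinal Hi = inord 2 by apply/val_inj; rewrite /= inordK.
  exact: red_x3.
- have ->: Ordinal Hi = inord 3 by apply/val_inj; rewrite /= inordK.
  exact: red_x4.
Qed.

Lemma red_all (K : fieldType) d p : red K (d.*2 + 7) p.
Proof.
elim/mpolyind: p => [|c m p _ _ IH]; first exact: red0.
apply: red_add => //; rewrite -mul_mpolyC; apply: red_scale.
rewrite mpolyXE_id.
have H : forall r : seq 'I_4, red K (d.*2 + 7) (\prod_(i <- r) 'X_i ^+ m i).
  elim=> [|i r IHr]; first by rewrite big_nil; apply: red1.
  rewrite big_cons; elim: (m i) => [|k IHk]; first by rewrite expr0 mul1r.
  by rewrite exprS -mulrA; apply: red_Xi.
exact: H.
Qed.

Lemma phiE (K : fieldType) a (q : {poly K}) : phi K a (E q) = q \Po 'X^4.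
Proof.
rewrite /E -horner_map phiX1 -map_poly_comp /comp_poly; congr (_.[_]).
by apply: eq_map_poly => c /=; rewrite /phi /= mmapC.
Qed.

Lemma NFzero (K : fieldType) d (q0 q1 q2 q3 : {poly K}) :
  (q0 \Po 'X^4) + (q1 \Po 'X^4) * 'X^6 + (q2 \Po 'X^4) * 'X^(d.*2 + 7)
   + (q3 \Po 'X^4) * ('X^6 * 'X^(d.*2 + 7)) = 0 ->
  [/\ q0 = 0, q1 = 0, q2 = 0 & q3 = 0].
Proof.
rewrite -exprD => H.
have C n := congr1 (fun r : {poly K} => r`_n) H.
have T : forall off (q : {poly K}), (forall k, q`_k = (0 : {poly K})`_(4 * k + off)) -> q = 0.
  by move=> off q Hq; apply/polyP => k; rewrite coef0 Hq coef0.
split.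
- apply: (T 0%N) => k; rewrite -(C (4 * k + 0)%N) /= !coefD !coefMXn !coef_comp_poly_Xn //.
  by repeat (case: ifP => ?); rewrite ?addr0 ?add0r; try (exfalso; lia); f_equal; lia.
- apply: (T 6%N) => k; rewrite -(C (4 * k + 6)%N) /= !coefD !coefMXn !coef_comp_poly_Xn //.
  by repeat (case: ifP => ?); rewrite ?addr0 ?add0r; try (exfalso; lia); f_equal; lia.
- apply: (T (d.*2 + 7)%N) => k; rewrite -(C (4 * k + (d.*2 + 7))%N) /= !coefD !coefMXn !coef_comp_poly_Xn //.
  by repeat (case: ifP => ?); rewrite ?addr0 ?add0r; try (exfalso; lia); f_equal; lia.
- apply: (T (6 + (d.*2 + 7))%N) => k; rewrite -(C (4 * k + (6 + (d.*2 + 7)))%N) /= !coefD !coefMXn !coef_comp_poly_Xn //.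
  by repeat (case: ifP => ?); rewrite ?addr0 ?add0r; try (exfalso; lia); f_equal; lia.
Qed.

Lemma phiC (K : fieldType) a (c : K) : phi K a c%:MP = c%:P.
Proof. by rewrite /phi /= mmapC. Qed.

Lemma sat_toric (K : fieldType) d p :
  phi K (d.*2 + 7) p = 0 -> sat (Jl K (d.*2 + 7)) (X1 K) p.
Proof.
move=> Hp; have [N [q0 [q1 [q2 [q3 H]]]]] := red_all K d p.
have := @sat_phi K (d.*2 + 7) _ ltac:(lia) H.
rewrite rmorphB rmorphM Hp mulr0 sub0r => /eqP; rewrite oppr_eq0 => /eqP.
rewrite /NF !rmorphD !rmorphM !phiE phiX2 phiX3 => /NFzero [h0 h1 h2 h3].
move: H; rewrite h0 h1 h2 h3 /NF E_0 !mul0r !addr0 /eqS subr0.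
exact: sat_cancel.
Qed.

Definition xs (K : fieldType) : seq {mpoly K[4]} := [:: X1 K; X2 K; X3 K; X4 K].

Definition Tp (K : fieldType) (p : {mpoly K[4]}) : Prop :=
  exists c : K, ideal_gen (xs K) (p - c%:MP).

Lemma T_add (K : fieldType) p q : Tp K p -> Tp K q -> Tp K (p + q).
Proof.
move=> [c Hc] [e He]; exists (c + e).
have ->: p + q - (c + e)%:MP = (p - c%:MP) + (q - e%:MP) by rewrite rmorphD; ring.
exact: idealD.
Qed.

Lemma T_mul (K : fieldType) p q : Tp K p -> Tp K q -> Tp K (p * q).
Proof.
move=> [c Hc] [e He]; exists (c * e).
have ->: p * q - (c * e)%:MP = (p - c%:MP) * (q - e%:MP) + c%:MP * (q - e%:MP)
   + e%:MP * (p - c%:MP) by rewrite rmorphM; ring.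
by apply: idealD; [apply: idealD|]; try apply: idealMl; try apply: idealMr.
Qed.

Lemma T_C (K : fieldType) (c : K) : Tp K c%:MP.
Proof. by exists c; rewrite subrr; apply: ideal0. Qed.

Lemma T_Xi (K : fieldType) (i : 'I_4) : Tp K 'X_i.
Proof.
exists 0; rewrite mpolyC0 subr0.
case: i => [[|[|[|[|k]]]] Hi] //.
- have ->: Ordinal Hi = inord 0 by apply/val_inj; rewrite /= inordK.
  exact: (@ideal_mem _ (xs K) 0).
- have ->: Ordinal Hi = inord 1 by apply/val_inj; rewrite /= inordK.
  exact: (@ideal_mem _ (xs K) 1).
- have ->: Ordinal Hi = inord 2 by apply/val_inj; rewrite /= inordK.
  exact: (@ideal_mem _ (xs K) 2).
- have ->: Ordinal Hi = inord 3 by apply/val_inj; rewrite /= inordK.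
  exact: (@ideal_mem _ (xs K) 3).
Qed.

Lemma T_all (K : fieldType) p : Tp K p.
Proof.
elim/mpolyind: p => [|c m p _ _ IH]; first by rewrite -mpolyC0; apply: T_C.
apply: T_add => //; rewrite -mul_mpolyC; apply: T_mul; first exact: T_C.
rewrite mpolyXE_id; apply: big_ind.
- by rewrite -mpolyC1; apply: T_C.
- exact: T_mul.
move=> i _; elim: (m i) => [|k IHk]; first by rewrite expr0 -mpolyC1; apply: T_C.
by rewrite exprS; apply: T_mul => //; apply: T_Xi.
Qed.

Lemma coefMX0 (K : fieldType) (r : {poly K}) n : (0 < n)%N -> (r * 'X^n)`_0 = 0.
Proof. by move=> hn; rewrite coefMXn hn. Qed.

Lemma toric_ideal_xs (K : fieldType) d p :
  phi K (d.*2 + 7) p = 0 -> ideal_gen (xs K) p.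
Proof.
have [c Hc] := T_all K p => Hp.
suff c0 : c = 0 by move: Hc; rewrite c0 mpolyC0 subr0.
have : phi K (d.*2 + 7) (p - c%:MP) = - c%:P by rewrite rmorphB Hp phiC sub0r.
move: Hc => /idealP[f ->] /(congr1 (fun r : {poly K} => r`_0)).
rewrite rmorph_sum coef_sum coefN coefC eqxx big1 => [/esym/eqP|].
  by rewrite oppr_eq0 => /eqP.
move=> [[|[|[|[|k]]]] Hi] _ //=; rewrite rmorphM ?phiX1 ?phiX2 ?phiX3 ?phiX4 coefMX0 //. all: lia.
Qed.

Lemma main_fwd (K : fieldType) d p :
  phi K (d.*2 + 7) p = 0 -> rad_gen (Jl K (d.*2 + 7)) p.
Proof.
set a := (d.*2 + 7)%N => Hp.
have [N HN] := @sat_toric K d p Hp.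
set gs := X1 K ^+ N :: Jl K a.
have JT : forall f, ideal_gen (Jl K a) f -> rad_gen gs f.
  by move=> f Hf; apply: radI; apply: ideal_cons_tail.
have g1 : ideal_gen (Jl K a) (X2 K ^+ (a - 2) - X1 K ^+ (a - 4) * X4 K ^+ 2)
  by exact: (@ideal_mem _ (Jl K a) 0).
have g2 : ideal_gen (Jl K a) (X3 K ^+ (a - 2) - X1 K ^+ 2 * X4 K ^+ (a - 4))
  by exact: (@ideal_mem _ (Jl K a) 1).
have g4 : ideal_gen (Jl K a) (X1 K ^+ (a + 2) - X4 K ^+ 4)
  by exact: (@ideal_mem _ (Jl K a) 3).
have r1 : rad_gen gs (X1 K).
  by apply: (@radX _ _ _ N); apply: radI; apply: ideal_cons_head.
have r2 : rad_gen gs (X2 K).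
  apply: (@radX _ _ _ (a - 2)).
  have ->: X2 K ^+ (a - 2) = (X2 K ^+ (a - 2) - X1 K ^+ (a - 4) * X4 K ^+ 2)
     + (X1 K ^+ (a - 4).-1 * X4 K ^+ 2) * X1 K.
    have e : X1 K ^+ (a - 4) = X1 K ^+ (a - 4).-1 * X1 K.
      by rewrite -exprSr prednK // /a; lia.
    by rewrite e; ring.
  by apply: radD; [apply: JT | apply: radMl].
have r3 : rad_gen gs (X3 K).
  apply: (@radX _ _ _ (a - 2)).
  have ->: X3 K ^+ (a - 2) = (X3 K ^+ (a - 2) - X1 K ^+ 2 * X4 K ^+ (a - 4))
     + (X1 K * X4 K ^+ (a - 4)) * X1 K by ring.
  by apply: radD; [apply: JT | apply: radMl].
have r4 : rad_gen gs (X4 K).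
  apply: (@radX _ _ _ 4).
  have ->: X4 K ^+ 4 = (-1) * (X1 K ^+ (a + 2) - X4 K ^+ 4)
     + (X1 K ^+ (a + 1)) * X1 K.
    have e : X1 K ^+ (a + 2) = X1 K ^+ (a + 1) * X1 K by rewrite -exprSr addn1 addn2.
    by rewrite e; ring.
  by apply: radD; [apply: radMl; apply: JT | apply: radMl].
have rp : rad_gen gs p.
  apply: (@rad_ideal _ _ _ _ (@toric_ideal_xs K d p Hp)).
  by case=> [|[|[|[|i]]]] //= _.
have [L HL] := rp.
have [j [c [Hj Hpj]]] := @ideal_cons _ _ _ _ HL.
exists L.+1; rewrite exprS Hpj.
have ->: p * (j + c * X1 K ^+ N) = p * j + c * (X1 K ^+ N * p) by ring.
by apply: idealD; apply: idealMl.
Qed.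

Lemma main_bwd (K : fieldType) a p :
  (4 <= a)%N -> rad_gen (Jl K a) p -> phi K a p = 0.
Proof.
move=> ha [k /(@ideal_phi K a _ ha)]; rewrite rmorphXn => /eqP.
by rewrite expf_eq0 => /andP[_ /eqP].
Qed.

Theorem mainTheorem7 (K : fieldType) (a : nat) (ha7 : (7 <= a)%N) (hodd : odd a) :
  let x1 : {mpoly K[4]} := 'X_(inord 0) in
  let x2 : {mpoly K[4]} := 'X_(inord 1) in
  let x3 : {mpoly K[4]} := 'X_(inord 2) in
  let x4 : {mpoly K[4]} := 'X_(inord 3) in
  forall p : {mpoly K[4]},
    toric_ideal (Ma a) p <->
    rad_gen [:: x2 ^+ (a - 2) - x1 ^+ (a - 4) * x4 ^+ 2;
                x3 ^+ (a - 2) - x1 ^+ 2 * x4 ^+ (a - 4);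
                x1 * x4 - x2 * x3;
                x1 ^+ (a + 2) - x4 ^+ 4;
                x4 ^+ 2 - x1 * x3 ^+ 2] p.
Proof.
move=> x1 x2 x3 x4 p.
change (phi K a p = 0 <-> rad_gen (Jl K a) p).
have [d ->] : exists d, a = (d.*2 + 7)%N.
  exists (a - 7)./2.
  have ho : odd (a - 7) = false by rewrite oddB // hodd.
  have h := odd_double_half (a - 7); rewrite ho add0n in h.
  by rewrite h subnK.
split; [exact: main_fwd | apply: main_bwd; lia].
Qed.
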